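(* Let $(V_1,\dots,V_n)$ be an $n$-tuple of doubly non-commuting isometries on $H$. (1) Let $A\ne B$ be subsets of $\{1,\dots,n\}$ and let $L_A,L_B$ be subspaces reducing all $V_1,\dots,V_n$ such that $V_i|_{L_A}$ is a pure isometry for $i\in A$ and unitary for $i\in A^c$, and $V_i|_{L_B}$ is a pure isometry for $i\in B$ and unitary for $i\in B^c$. Then $L_A\perp L_B$. (2) Suppose that for each $A\subseteq\{1,\dots,n\}$, $L_A$ is a subspace reducing all $V_1,\dots,V_n$ such that $V_i|_{L_A}$ is a pure isometry for $i\in A$ and unitary for $i\in A^c$. If $H=\bigoplus_{A}L_A$ algebraically, then $L_A=H_A$ for all $A$.
   Context: Fix $n\ge1$ and $z_{ij}\in\mathbb T$ ($i\ne j$) with $z_{ji}=\overline{z_{ij}}$; $(V_1,\dots,V_n)$ is doubly non-commuting if the $V_i$ are isometries with $V_i^*V_j=\overline{z_{ij}}V_jV_i^*$ for $i\ne j$. Subspaces are closed; $A^c$ is the complement in $\{1,\dots,n\}$. For an isometry $S$ and an $S$-invariant subspace $L$, $S|_L$ is a pure isometry if $\{0\}$ is the only $S$-invariant subspace of $L$ on which $S$ is unitary. $H^{\mathrm{iso}}(S)=\bigoplus_{k\ge0}S^k(\ker S^* )$, $H^{\mathrm{uni}}(S)=\bigcap_{k\ge0}S^k(H)$, and $H_A=\bigcap_{i\in A}H^{\mathrm{iso}}(V_i)\cap\bigcap_{i\in A^c}H^{\mathrm{uni}}(V_i)$ (empty intersection $=H$). *)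

(* Defs.v *)
From HB Require Import structures.
From mathcomp Require Import all_boot all_order all_algebra.
From mathcomp Require Import complex.
From mathcomp Require Export reals.
Set Implicit Arguments. Unset Strict Implicit. Unset Printing Implicit Defensive.
Import Order.TTheory GRing.Theory Num.Theory.
Local Open Scope ring_scope.

Section Hilbert.
Variables (R : realType) (H : lmodType R[i]) (ip : H -> H -> R[i]).

Definition hnorm (x : H) : R := Num.sqrt (complex.Re (ip x x)).

Definition hconverges (u : nat -> H) (x : H) : Prop :=
  forall e : R, 0 < e -> exists N, forall m, (N <= m)%N -> hnorm (u m - x) < e.

Definition hcauchy (u : nat -> H) : Prop :=
  forall e : R, 0 < e -> exists N, forall m k, (N <= m)%N -> (N <= k)%N ->
    hnorm (u m - u k) < e.

Definition is_hilbert : Prop :=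
  [/\ forall (a : R[i]) (x y z : H), ip (a *: x + y) z = a * ip x z + ip y z,
      forall x y : H, ip y x = (ip x y)^*,
      forall x : H, 0 <= ip x x,
      forall x : H, ip x x = 0 -> x = 0
    & forall u : nat -> H, hcauchy u -> exists x, hconverges u x].

Definition closed_subspace (L : H -> Prop) : Prop :=
  [/\ L 0,
      forall (a : R[i]) (x y : H), L x -> L y -> L (a *: x + y)
    & forall (u : nat -> H) (x : H), (forall m, L (u m)) -> hconverges u x -> L x].

Definition is_linear (T : H -> H) : Prop :=
  forall (a : R[i]) (x y : H), T (a *: x + y) = a *: T x + T y.

Definition is_adjoint (T Ts : H -> H) : Prop :=
  forall x y : H, ip (T x) y = ip x (Ts y).

Definition reduces (L : H -> Prop) (T Ts : H -> H) : Prop :=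
  (forall x, L x -> L (T x)) /\ (forall x, L x -> L (Ts x)).

(* the restriction of the isometry T to the invariant subspace L is unitary *)
Definition unitary_on (T : H -> H) (L : H -> Prop) : Prop :=
  forall y, L y -> exists x, L x /\ T x = y.

Definition pure_on (T : H -> H) (L : H -> Prop) : Prop :=
  forall M : H -> Prop, closed_subspace M -> (forall x, M x -> L x) ->
    (forall x, M x -> M (T x)) -> unitary_on T M -> forall x, M x -> x = 0.

Definition closed_span (G : H -> Prop) (x : H) : Prop :=
  forall M : H -> Prop, closed_subspace M -> (forall y, G y -> M y) -> M x.

Definition Hiso (S Ss : H -> H) : H -> Prop :=
  closed_span (fun y => exists k w, Ss w = 0 /\ y = iter k S w).

Definition Huni (S : H -> H) (x : H) : Prop :=
  forall k, exists y, x = iter k S y.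

Definition HA (n : nat) (V Vs : 'I_n -> H -> H) (A : {set 'I_n}) (x : H) : Prop :=
  (forall i, i \in A -> Hiso (V i) (Vs i) x) /\ (forall i, i \notin A -> Huni (V i) x).

Definition typeA (n : nat) (V Vs : 'I_n -> H -> H) (A : {set 'I_n}) (L : H -> Prop) : Prop :=
  [/\ closed_subspace L,
      forall i, reduces L (V i) (Vs i),
      forall i, i \in A -> pure_on (V i) L
    & forall i, i \notin A -> unitary_on (V i) L].

End Hilbert.

Definition doubly_noncommuting (R : realType) (H : lmodType R[i]) (ip : H -> H -> R[i])
  (n : nat) (z : 'I_n -> 'I_n -> R[i]) (V Vs : 'I_n -> H -> H) : Prop :=
  [/\ (forall i j, i != j -> `|z i j| = 1) /\
        (forall i j, i != j -> z j i = (z i j)^* ),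
      forall i, is_linear (V i),
      forall i, is_adjoint ip (V i) (Vs i),
      forall i x, Vs i (V i x) = x
    & forall i j, i != j -> forall x, Vs i (V j x) = (z i j)^* *: V j (Vs i x)].

(* Main.v *)
Require Import Defs.
From HB Require Import structures.
From mathcomp Require Import all_boot all_order all_algebra.
From mathcomp Require Import complex.
From mathcomp Require Import boolp classical_sets lra ring.
Import Order.TTheory GRing.Theory Num.Theory.
Local Open Scope ring_scope.

Lemma decr_cauchy (R : realType) (a : nat -> R) :
  (forall k m, (k <= m)%N -> a m <= a k) -> (forall k, 0 <= a k) ->
  forall e, 0 < e -> exists N, forall m, (N <= m)%N -> a N - a m < e.
Proof.
move=> dec pos e e0.
set E : set R := fun x => exists k, x = - a k.
have hs : has_sup E.
  split; first by exists (- a 0%N), 0%N.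
  exists 0 => x [k ->]; rewrite oppr_le0; exact: pos.
have [x [N ->] hN] := sup_adherent e0 hs.
exists N => m Nm.
have : - a m <= sup E by apply: sup_upper_bound => //; exists m.
move: hN; lra.
Qed.

Section Basic.
Variables (R : realType) (H : lmodType R[i]) (ip : H -> H -> R[i]).
Hypothesis ipD : forall (a : R[i]) (x y z : H), ip (a *: x + y) z = a * ip x z + ip y z.
Hypothesis ipC : forall x y : H, ip y x = (ip x y)^*.
Hypothesis ip_ge0 : forall x : H, 0 <= ip x x.
Hypothesis ip_eq0 : forall x : H, ip x x = 0 -> x = 0.

Lemma ipDl x y z : ip (x + y) z = ip x z + ip y z.
Proof. by have := ipD 1 x y z; rewrite scale1r mul1r. Qed.
Lemma ip0l z : ip 0 z = 0.
Proof. have h := ipDl 0 0 z; rewrite addr0 in h.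
by move: h; rewrite -{1}[ip 0 z]addr0 => /addrI <-. Qed.
Lemma ipZl a x z : ip (a *: x) z = a * ip x z.
Proof. by rewrite -[a *: x]addr0 ipD ip0l addr0. Qed.
Lemma ipNl x z : ip (- x) z = - ip x z.
Proof. by rewrite -scaleN1r ipZl mulN1r. Qed.
Lemma ipBl x y z : ip (x - y) z = ip x z - ip y z.
Proof. by rewrite ipDl ipNl. Qed.
Lemma ipDr x y z : ip z (x + y) = ip z x + ip z y.
Proof. by rewrite ipC [ip z x]ipC [ip z y]ipC ipDl rmorphD. Qed.
Lemma ip0r z : ip z 0 = 0.
Proof. by rewrite ipC ip0l conjC0. Qed.
Lemma ipZr a x z : ip z (a *: x) = a^* * ip z x.
Proof. by rewrite ipC [ip z x]ipC ipZl rmorphM. Qed.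
Lemma ipNr x z : ip z (- x) = - ip z x.
Proof. by rewrite ipC [ip z x]ipC ipNl rmorphN. Qed.
Lemma ipBr x y z : ip z (x - y) = ip z x - ip z y.
Proof. by rewrite ipDr ipNr. Qed.
Lemma ip_sumr (I : finType) (f : I -> H) z :
  ip z (\sum_(i : I) f i) = \sum_(i : I) ip z (f i).
Proof. exact: (big_morph (fun v => ip z v) (fun a b => ipDr a b z) (ip0r z)). Qed.
Lemma ip_sym0 x y : ip x y = 0 -> ip y x = 0.
Proof. by move=> h; rewrite ipC h conjC0. Qed.

Lemma ge0_RC (c : R[i]) : 0 <= c -> c = (complex.Re c)%:C%C.
Proof. by case: c => a b; rewrite lecE /= => /andP[/eqP -> _]. Qed.

Definition nn x := complex.Re (ip x x).
Lemma ipnn x : ip x x = (nn x)%:C%C.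
Proof. exact: ge0_RC. Qed.
Lemma nn_ge0 x : 0 <= nn x.
Proof. by rewrite -ler0c -ipnn. Qed.
Lemma nn_eq0 x : nn x = 0 -> x = 0.
Proof. by move=> h; apply: ip_eq0; rewrite ipnn h. Qed.
Lemma nnN x : nn (- x) = nn x.
Proof. by rewrite /nn ipNl ipNr opprK. Qed.
Lemma nnB x y : nn (x - y) = nn (y - x).
Proof. by rewrite -nnN opprB. Qed.
Lemma nn_par x y : nn (x + y) <= 2 * nn x + 2 * nn y.
Proof.
have e : ip (x + y) (x + y) + ip (x - y) (x - y) = 2%:R * ip x x + 2%:R * ip y y.
  rewrite !ipDl !ipDr !ipNl !ipNr opprK; ring.
move: e; rewrite !ipnn -(rmorph_nat (real_complex R) 2) -!(rmorphM (real_complex R)) -!rmorphD => /complexI e.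
have := nn_ge0 (x - y). lra.
Qed.



Lemma ip_ext u v : (forall w, ip w u = ip w v) -> u = v.
Proof.
move=> h; apply/eqP; rewrite -subr_eq0; apply/eqP; apply: ip_eq0.
by rewrite ipBr h subrr.
Qed.

Lemma ip_suml (I : finType) (f : I -> H) z :
  ip (\sum_(i : I) f i) z = \sum_(i : I) ip (f i) z.
Proof. exact: (big_morph (fun v => ip v z) (fun a b => ipDl a b z) (ip0l z)). Qed.

Definition conv (u : nat -> H) (x : H) :=
  forall e : R, 0 < e -> exists N, forall m, (N <= m)%N -> nn (u m - x) < e.

Lemma hnorm_lt_sqrt u e : 0 < e -> (hnorm ip u < Num.sqrt e) = (nn u < e).
Proof. by move=> e0; rewrite /hnorm ltr_sqrt. Qed.

Lemma hnorm_lt u e : 0 < e -> (hnorm ip u < e) = (nn u < e ^+ 2).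
Proof.
move=> e0; rewrite -hnorm_lt_sqrt ?exprn_gt0 // sqrtr_sqr ger0_norm //.
exact: ltW.
Qed.

Lemma convP u x : hconverges ip u x <-> conv u x.
Proof.
split=> h e e0.
  have [|N hN] := h (Num.sqrt e); first by rewrite sqrtr_gt0.
  by exists N => m /hN; rewrite hnorm_lt_sqrt.
have [|N hN] := h (e ^+ 2); first by rewrite exprn_gt0.
by exists N => m /hN; rewrite hnorm_lt.
Qed.

Definition cauchy (u : nat -> H) :=
  forall e : R, 0 < e -> exists N, forall m k, (N <= m)%N -> (N <= k)%N ->
    nn (u m - u k) < e.

Lemma cauchyP u : cauchy u -> hcauchy ip u.
Proof.
move=> h e e0.
have [|N hN] := h (e ^+ 2); first by rewrite exprn_gt0.
by exists N => m k /hN hm /hm; rewrite hnorm_lt.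
Qed.

Lemma nn_small0 (a : R) : 0 <= a -> (forall e, 0 < e -> a < e) -> a = 0.
Proof.
move=> a0 h; apply/eqP; rewrite eq_le a0 andbT; apply/negP => /negP.
rewrite -ltNge => ap; have := h a ap; by rewrite ltxx.
Qed.

Lemma conv_uniq u p q : conv u p -> conv u q -> p = q.
Proof.
move=> hp hq; apply/eqP; rewrite -subr_eq0; apply/eqP; apply: nn_eq0.
apply: nn_small0; first exact: nn_ge0.
move=> e e0.
have e8 : 0 < e / 8%:R by rewrite divr_gt0.
have [N1 h1] := hp _ e8; have [N2 h2] := hq _ e8.
have a1 := h1 (maxn N1 N2) (leq_maxl _ _).
have a2 := h2 (maxn N1 N2) (leq_maxr _ _).
set w := u (maxn N1 N2) in a1 a2.
have := nn_par (p - w) (w - q).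
have -> : p - w + (w - q) = p - q by rewrite addrA subrK.
rewrite [nn (p - w)]nnB; lra.
Qed.



Lemma conjR (t : R) : (t%:C%C)^* = t%:C%C.
Proof. exact: conjc_real. Qed.

Lemma rcE (a : R) : complex_real_complex_def__canonical__GRing_RMorphism R a = a%:C%C.
Proof. by []. Qed.

Lemma real_aux (W n t Y : R) : 0 < t -> t * Y = 1 - t -> 0 < n -> W < t * n ->
  0 <= W - 2%:R * t * n + t * n * (t * Y) -> False.
Proof.
move=> t0 tY n0 hW; rewrite tY.
have : 0 <= t * n * t by rewrite !mulr_ge0 // ltW.
nra.
Qed.

Lemma inv_aux (Y : R) : 0 <= Y -> 0 < (1 + Y)^-1 /\ (1 + Y)^-1 * Y = 1 - (1 + Y)^-1.
Proof.
move=> Y0; split; first by rewrite invr_gt0; lra.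
have : (1 + Y)^-1 * (1 + Y) = 1 by rewrite mulVf //; apply/eqP => h; lra.
rewrite mulrDr mulr1; lra.
Qed.

Lemma lim0_ip (u : nat -> H) y c :
  (forall e, 0 < e -> exists m, nn (u m) < e) -> (forall m, ip (u m) y = c) -> c = 0.
Proof.
move=> hu hc.
set Y := nn y.
have Y0 : 0 <= Y := nn_ge0 y.
set t := (1 + Y)^-1.
have [t0 tY] := @inv_aux Y Y0.
have N0 : 0 <= `|c| ^+ 2 by rewrite exprn_ge0.
set n := complex.Re (`|c| ^+ 2).
have Nn : `|c| ^+ 2 = n%:C%C by exact: ge0_RC.
have Ncc : c * c^* = n%:C%C by rewrite -normCK.
have n0 : 0 <= n by rewrite -ler0c -Nn.
have key : forall m, 0 <= nn (u m) - 2%:R * t * n + t * n * (t * Y).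
  move=> m; set w := u m; set s := (t%:C%C * c).
  have E : ip (w - s *: y) (w - s *: y) = (nn w - 2%:R * t * n + t * n * (t * Y))%:C%C.
    have sJ : s^* = t%:C%C * c^* by rewrite /s rmorphM; congr (_ * _); apply: conjR.
    rewrite !ipBl !ipBr !ipZl !ipZr hc (ipC w y) hc !ipnn sJ /s.
    rewrite rmorphD rmorphB !rmorphM rmorph_nat !rcE -Ncc; ring.
  by rewrite -ler0c -E ip_ge0.
have n00 : n = 0.
  apply/eqP; rewrite eq_le n0 andbT; apply/negP => /negP; rewrite -ltNge => np.
  have [|m hm] := hu (t * n); first exact: mulr_gt0.
  by case: (@real_aux _ _ _ _ t0 tY np hm (key m)).
by apply/eqP; rewrite -normr_eq0 -sqrf_eq0 Nn n00.
Qed.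


Lemma lin0 (f : H -> H) : is_linear f -> f 0 = 0.
Proof.
move=> hf; have h := hf 1 0 0; rewrite scaler0 addr0 scale1r in h.
by move: h; rewrite -{1}[f 0]addr0 => /addrI <-.
Qed.
Lemma linD (f : H -> H) x y : is_linear f -> f (x + y) = f x + f y.
Proof. by move=> hf; have := hf 1 x y; rewrite !scale1r. Qed.
Lemma linZ (f : H -> H) a x : is_linear f -> f (a *: x) = a *: f x.
Proof. by move=> hf; have := hf a x 0; rewrite !addr0 lin0 // addr0. Qed.
Lemma linB (f : H -> H) x y : is_linear f -> f (x - y) = f x - f y.
Proof. by move=> hf; rewrite linD // -scaleN1r linZ // scaleN1r. Qed.
Lemma iter_lin (f : H -> H) k : is_linear f -> is_linear (iter k f).
Proof.
move=> hf; elim: k => [|k IH] a x y //=.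
by rewrite IH hf.
Qed.
Lemma comp_lin (f g : H -> H) : is_linear f -> is_linear g -> is_linear (fun x => f (g x)).
Proof. by move=> hf hg a x y; rewrite hg hf. Qed.

Section Op.
Variables (T Ts : H -> H).
Hypothesis Tlin : is_linear T.
Hypothesis Tadj : forall x y, ip (T x) y = ip x (Ts y).
Hypothesis Tiso : forall x, Ts (T x) = x.

Lemma Tslin : is_linear Ts.
Proof.
move=> a x y; apply: ip_ext => w.
by rewrite -Tadj ipDr ipZr !Tadj ipDr ipZr.
Qed.

Lemma iter_adj k x y : ip (iter k T x) y = ip x (iter k Ts y).
Proof.
elim: k x y => [//|k IH] x y.
by rewrite iterS Tadj IH iterSr.
Qed.

Lemma iter_iso k x : iter k Ts (iter k T x) = x.
Proof.
elim: k x => [//|k IH] x.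
by rewrite iterS iterSr IH Tiso.
Qed.

Definition P k x := iter k T (iter k Ts x).

Lemma Plin k : is_linear (P k).
Proof. by move=> b x y; rewrite /P (iter_lin _ k Tslin) (iter_lin _ k Tlin). Qed.

Lemma PipL k x y : ip (P k x) y = ip (iter k Ts x) (iter k Ts y).
Proof. by rewrite /P iter_adj. Qed.

Lemma PipR k x y : ip x (P k y) = ip (iter k Ts x) (iter k Ts y).
Proof. by rewrite ipC PipL -ipC. Qed.

Lemma PT k w : P k (iter k T w) = iter k T w.
Proof. by rewrite /P iter_iso. Qed.

Lemma PP k m x : (k <= m)%N -> P k (P m x) = P m x.
Proof.
move=> km.
have -> : P m x = iter k T (iter (m - k) T (iter m Ts x)) by rewrite /P -iterD subnKC.
by rewrite PT.
Qed.

Lemma TsP k x : iter k Ts (P k x) = iter k Ts x.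
Proof. by rewrite /P iter_iso. Qed.

Definition a k x := nn (iter k Ts x).

Lemma nnP k x : nn (P k x) = a k x.
Proof. by rewrite /nn /a PipL TsP. Qed.

Lemma nnPP k m x : (k <= m)%N -> nn (P k x - P m x) = a k x - a m x.
Proof.
move=> km.
have e1 : ip (P k x) (P m x) = ip (iter m Ts x) (iter m Ts x)
  by rewrite PipL -PipR PP // PipR.
have e2 : ip (P m x) (P k x) = ip (iter m Ts x) (iter m Ts x).
  by rewrite ipC e1 conj_Creal // ger0_real.
rewrite /nn !ipBl !ipBr e1 e2 !PipL !TsP !ipnn -/(a k x) -/(a m x).
by rewrite subrr subr0 -rmorphB.
Qed.

Lemma a_decr k m x : (k <= m)%N -> a m x <= a k x.
Proof.
move=> km; have := nn_ge0 (P k x - P m x); rewrite nnPP //; lra.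
Qed.

Lemma a_ge0 k x : 0 <= a k x.
Proof. exact: nn_ge0. Qed.

Lemma nnP_le k w : nn (P k w) <= nn w.
Proof. by rewrite nnP; apply: (a_decr 0). Qed.

Lemma P_cauchy x : cauchy (fun k => P k x).
Proof.
move=> e e0.
have [N hN] := @decr_cauchy R (fun k => a k x) (fun k m km => a_decr k m x km) (fun k => a_ge0 k x) e e0.
exists N => m k Nm Nk.
case: (leqP m k) => mk.
  rewrite nnPP //; have := hN k Nk; have := a_decr N m x Nm; lra.
rewrite nnB nnPP; last exact: ltnW.
have := hN m Nm; have := a_decr N k x Nk; lra.
Qed.

Lemma P_cont j u q : conv u q -> conv (fun m => P j (u m)) (P j q).
Proof.
move=> h e e0; have [N hN] := h e e0; exists N => m /hN.
apply: le_lt_trans; rewrite -linB; last exact: Plin.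
exact: nnP_le.
Qed.



Hypothesis cpl : forall u, hcauchy ip u -> exists x, hconverges ip u x.

Lemma iterT_L (L : H -> Prop) : reduces L T Ts ->
  forall k w, L w -> L (iter k T w) /\ L (iter k Ts w).
Proof.
move=> [LT LTs]; elim=> [|k IH] w Lw //=.
by have [h1 h2] := IH w Lw; split; [apply: LT | apply: LTs].
Qed.

Lemma P_conv0 (L : H -> Prop) : closed_subspace ip L -> reduces L T Ts -> pure_on ip T L ->
  forall x, L x -> conv (fun k => P k x) 0.
Proof.
move=> [L0 Llin Lcl] red hpure x Lx.
have [LT LTs] := red.
have [q /convP hq] := cpl _ (@cauchyP _ (P_cauchy x)).
have LP : forall k w, L w -> L (P k w).
  move=> k w Lw; rewrite /P; have [_ h] := @iterT_L L red k w Lw.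
  by have [h' _] := @iterT_L L red k _ h.
have Lq : L q by apply: (Lcl _ q (fun m => LP m x Lx)); apply/convP.
have Pq : forall j, P j q = q.
  move=> j; apply: (conv_uniq _ _ _ (P_cont j _ _ hq)).
  move=> e e0; have [N hN] := hq e e0; exists (maxn N j) => m hm.
  rewrite PP; last exact: leq_trans (leq_maxr _ _) hm.
  by apply: hN; exact: leq_trans (leq_maxl _ _) hm.
pose M := fun u => L u /\ forall j, P j u = u.
have Mcl : closed_subspace ip M.
  split.
  - by split => // j; exact: lin0 (Plin j).
  - move=> b u v [Lu Pu] [Lv Pv]; split; first exact: Llin.
    by move=> j; rewrite Plin Pu Pv.
  - move=> u v Mu /convP hv; split.
      by apply: (Lcl u v (fun m => (Mu m).1)); apply/convP.
    move=> j; apply: (conv_uniq _ _ _ (P_cont j _ _ hv)).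
    move=> e e0; have [N hN] := hv e e0; exists N => m /hN.
    by rewrite (Mu m).2.
have q0 : q = 0.
  apply: (hpure M Mcl (fun u Mu => Mu.1)); last by split.
  - move=> u [Lu Pu]; split; first exact: LT.
    case=> [|j] //.
    rewrite /P [iter j.+1 Ts _]iterSr Tiso iterS; congr (T _); exact: Pu j.
  - move=> y [Ly Py]; exists (Ts y); split; last exact: Py 1%N.
    split; first exact: LTs.
    move=> j.
    have e : Ts y = iter j T (iter j.+1 Ts y) by rewrite -{1}(Py j.+1) /P iterS Tiso.
    by rewrite {2}e iterSr.
by rewrite q0 in hq.
Qed.

Lemma pure_perp (L : H -> Prop) x y : closed_subspace ip L -> reduces L T Ts ->
  pure_on ip T L -> L x -> Huni T y -> ip x y = 0.
Proof.
move=> Lc red hp Lx hy.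
have h := @P_conv0 L Lc red hp x Lx.
apply: (lim0_ip (fun k => P k x) y).
  move=> e e0; have [N hN] := h e e0; exists N; have := hN N (leqnn N); by rewrite subr0.
move=> k; have [w ->] := hy k.
by rewrite PipL -PipR PT.
Qed.

Lemma iso_perp x y : Hiso ip T Ts x -> Huni T y -> ip x y = 0.
Proof.
move=> hx hy; apply: (hx (fun u => ip u y = 0)).
  split.
  - exact: ip0l.
  - by move=> b u v hu hv; rewrite ipD hu hv mulr0 addr0.
  - move=> u v hu /convP hv.
    have := lim0_ip (fun m => u m - v) y (- ip v y).
    move=> h; apply/eqP; rewrite -oppr_eq0; apply/eqP; apply: h.
      by move=> e e0; have [N hN] := hv e e0; exists N; exact: hN N (leqnn N).
    by move=> m; rewrite ipBl hu sub0r.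
move=> u [k [w [hw ->]]].
have [v ->] := hy k.+1.
by rewrite iter_adj iterSr iter_iso ipC Tadj hw ip0r conjC0.
Qed.

Lemma pure_iso (L : H -> Prop) x : closed_subspace ip L -> reduces L T Ts ->
  pure_on ip T L -> L x -> Hiso ip T Ts x.
Proof.
move=> Lc red hp Lx M [M0 Mlin Mcl] hG.
have Mk : forall k, M (x - P k x).
  elim=> [|k IH]; first by rewrite /P /= subrr.
  have -> : x - P k.+1 x = 1 *: (x - P k x) + iter k T (iter k Ts x - T (Ts (iter k Ts x))).
    rewrite scale1r (linB _ _ _ (iter_lin T k Tlin)) /P [iter k.+1 T _]iterSr [iter k.+1 Ts _]iterS.
    by rewrite addrA subrK.
  apply: Mlin IH _; apply: hG.
  exists k, (iter k Ts x - T (Ts (iter k Ts x))); split => //.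
  by rewrite (linB _ _ _ Tslin) Tiso subrr.
apply: (Mcl (fun k => x - P k x)) => //.
apply/convP => e e0; have [N hN] := @P_conv0 L Lc red hp x Lx e e0; exists N => m /hN.
by rewrite subr0 addrAC subrr add0r nnN.
Qed.

Lemma uni_Huni (L : H -> Prop) y : unitary_on T L -> L y -> Huni T y.
Proof.
move=> hu Ly.
suff h : forall k, exists w, L w /\ y = iter k T w.
  by move=> k; have [w [_ ->]] := h k; exists w.
elim=> [|k [w [Lw ->]]]; first by exists y.
have [w' [Lw' <-]] := hu w Lw; exists w'; split => //.
by rewrite iterSr.
Qed.

End Op.
End Basic.

Lemma set_diff (n : nat) (A B : {set 'I_n}) : A != B -> exists i, (i \in A) != (i \in B).
Proof.
move=> hAB; apply/existsP; move: hAB; apply: contraR.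
rewrite negb_exists => /forallP h; apply/eqP/setP => i.
by apply/eqP; exact: negbNE (h i).
Qed.

Lemma part1 (R : realType) (H : lmodType R[i]) (ip : H -> H -> R[i])
  (n : nat) (z : 'I_n -> 'I_n -> R[i]) (V Vs : 'I_n -> H -> H) :
  is_hilbert ip ->
  doubly_noncommuting ip z V Vs ->
  (forall (A B : {set 'I_n}) (LA LB : H -> Prop),
      A != B -> typeA ip V Vs A LA -> typeA ip V Vs B LB ->
      forall x y, LA x -> LB y -> ip x y = 0).
Proof.
move=> [ipD ipC ip_ge0 ip_eq0 cpl] [_ Vlin Vadj Viso _] A B LA LB hAB
  [LAc LAr LAp LAu] [LBc LBr LBp LBu] x y hx hy.
have [i hi] := @set_diff _ _ _ hAB.
case iA: (i \in A) hi; case iB: (i \in B) => //= _.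
  apply: (@pure_perp _ _ _ ipD ipC ip_ge0 ip_eq0 _ _ (Vlin i) (Vadj i) (Viso i) cpl LA x y
    LAc (LAr i) (LAp i iA) hx).
  exact: (@uni_Huni _ _ _ _ _ (LBu i (negbT iB)) hy).
apply: (@ip_sym0 _ _ _ ipC _ _).
apply: (@pure_perp _ _ _ ipD ipC ip_ge0 ip_eq0 _ _ (Vlin i) (Vadj i) (Viso i) cpl LB y x
    LBc (LBr i) (LBp i iB) hy).
exact: (@uni_Huni _ _ _ _ _ (LAu i (negbT iA)) hx).
Qed.

Theorem proposition3p5 (R : realType) (H : lmodType R[i]) (ip : H -> H -> R[i])
  (n : nat) (z : 'I_n -> 'I_n -> R[i]) (V Vs : 'I_n -> H -> H) :
  is_hilbert ip ->
  doubly_noncommuting ip z V Vs ->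
  (forall (A B : {set 'I_n}) (LA LB : H -> Prop),
      A != B -> typeA ip V Vs A LA -> typeA ip V Vs B LB ->
      forall x y, LA x -> LB y -> ip x y = 0)
  /\
  (forall L : {set 'I_n} -> H -> Prop,
      (forall A, typeA ip V Vs A (L A)) ->
      (forall x : H, exists f : {set 'I_n} -> H,
          (forall A, L A (f A)) /\ x = \sum_(A : {set 'I_n}) f A) ->
      (forall f : {set 'I_n} -> H, (forall A, L A (f A)) ->
          \sum_(A : {set 'I_n}) f A = 0 -> forall A, f A = 0) ->
      forall A x, L A x <-> HA ip V Vs A x).
Proof.
move=> hH hD.
have P1 := @part1 _ _ _ _ _ _ _ hH hD.
split => // L hL hdec _ A x.
case: hH => [ipD ipC ip_ge0 ip_eq0 cpl]; case: hD => [_ Vlin Vadj Viso _].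
split.
  move=> hx; have [Lc Lr Lp Lu] := hL A; split.
    move=> i iA.
    exact: (@pure_iso _ _ _ ipD ipC ip_ge0 ip_eq0 _ _ (Vlin i) (Vadj i) (Viso i) cpl (L A) x
      Lc (Lr i) (Lp i iA) hx).
  move=> i iA; exact: (@uni_Huni _ _ _ _ _ (Lu i iA) hx).
move=> [hiso huni].
have [f [hf xE]] := hdec x; subst x.
have fB0 : forall B, B != A -> f B = 0.
  move=> B hBA.
  have hxB : ip (\sum_(C : {set 'I_n}) f C) (f B) = 0.
    have [i hi] := @set_diff _ _ _ hBA.
    have [Lc Lr Lp Lu] := hL B.
    case iB: (i \in B) hi; case iA: (i \in A) => //= _.
      apply: (@ip_sym0 _ _ _ ipC _ _).
      apply: (@pure_perp _ _ _ ipD ipC ip_ge0 ip_eq0 _ _ (Vlin i) (Vadj i) (Viso i) cpl (L B)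
        (f B) _ Lc (Lr i) (Lp i iB) (hf B)).
      exact: (huni i (negbT iA)).
    apply: (@iso_perp _ _ _ ipD ipC ip_ge0 _ _ (Vadj i) (Viso i)).
      exact: hiso.
    exact: (@uni_Huni _ _ _ _ _ (Lu i (negbT iB)) (hf B)).
  move: hxB; rewrite (@ip_suml _ _ _ ipD) (bigD1 B) //= big1 ?addr0.
    by move/ip_eq0.
  move=> C hCB; exact: (P1 C B (L C) (L B) hCB (hL C) (hL B) _ _ (hf C) (hf B)).
rewrite (bigD1 A) //= big1 ?addr0; first exact: hf.
by move=> C hCA; apply: fB0.
Qed.
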